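(* If $\Delta(\Phi_{23},\Phi_{13},\Phi_{12})$ and $\Delta(\Phi_1,\Phi_2,\Phi_3)$ are reciprocal triangles with interior points $\Phi$ and $\Phi_{123}$ respectively, then $$\frac{(\Phi_1-\Phi_2)(\Phi_3-\Phi_{123})}{(\Phi_2-\Phi_3)(\Phi_{123}-\Phi_1)}=\frac{(\Phi_{23}-\Phi_{13})(\Phi_{12}-\Phi)}{(\Phi_{13}-\Phi_{12})(\Phi-\Phi_{23})},$$ that is, $Q(\Phi_1,\Phi_2,\Phi_3,\Phi_{123})=Q(\Phi_{23},\Phi_{13},\Phi_{12},\Phi)$.
   Context: The plane is identified with $\mathbb{C}$. The cross-ratio of four points is $Q(P_1,P_2,P_3,P_4)=\frac{(P_1-P_2)(P_3-P_4)}{(P_2-P_3)(P_4-P_1)}$. Reciprocal triangles: let $\Delta(\Phi_{23},\Phi_{13},\Phi_{12})$ be a non-degenerate triangle and $\Phi$ an additional point; let $\Delta(\Phi_1,\Phi_2,\Phi_3)$ be a non-degenerate triangle whose edges $(\Phi_1,\Phi_2)$, $(\Phi_2,\Phi_3)$, $(\Phi_3,\Phi_1)$ are parallel to the segments $(\Phi,\Phi_{12})$, $(\Phi,\Phi_{23})$, $(\Phi,\Phi_{13})$ respectively. The two triangles are reciprocal with interior points $\Phi$, $\Phi_{123}$ if the point $\Phi_{123}$ is such that the segments $(\Phi_1,\Phi_{123})$, $(\Phi_2,\Phi_{123})$, $(\Phi_3,\Phi_{123})$ are parallel to the edges $(\Phi_{13},\Phi_{12})$, $(\Phi_{12},\Phi_{23})$,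 $(\Phi_{23},\Phi_{13})$ respectively. *)

(* Defs.v *)
(* the plane is identified with R[i] = complex R, R a real closed field. *)
From HB Require Import structures.
From mathcomp Require Import all_boot all_order all_algebra.
From mathcomp Require Import complex.
Set Implicit Arguments. Unset Strict Implicit. Unset Printing Implicit Defensive.
Import Order.TTheory GRing.Theory Num.Theory.
Local Open Scope ring_scope.
Local Open Scope complex_scope.

Definition cross_ratio (R : rcfType) (P1 P2 P3 P4 : R[i]) : R[i] :=
  ((P1 - P2) * (P3 - P4)) / ((P2 - P3) * (P4 - P1)).

(* the segment (A,B) is parallel to the segment (C,D): both are genuine
   (non-degenerate) segments and B - A is a real multiple of D - C. *)
Definition parallel (R : rcfType) (A B C D : R[i]) : Prop :=
  B - A != 0 /\ D - C != 0 /\ complex.Im ((B - A) * (D - C)^*) = 0.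

Definition nondegenerate (R : rcfType) (A B C : R[i]) : Prop :=
  complex.Im ((B - A) * (C - A)^*) != 0.

Definition reciprocal (R : rcfType) (P23 P13 P12 P P1 P2 P3 P123 : R[i]) : Prop :=
  nondegenerate P23 P13 P12 /\ nondegenerate P1 P2 P3 /\
  parallel P1 P2 P P12 /\ parallel P2 P3 P P23 /\ parallel P3 P1 P P13 /\
  parallel P1 P123 P13 P12 /\ parallel P2 P123 P12 P23 /\
  parallel P3 P123 P23 P13.

(* Main.v *)
Require Import Defs.
From HB Require Import structures.
From mathcomp Require Import all_boot all_order all_algebra.
From mathcomp Require Import complex ring lra.
Import Order.TTheory GRing.Theory Num.Theory.
Local Open Scope ring_scope.
Local Open Scope complex_scope.
Lemma key (R: rcfType) (a b c : R[i]) (s1 s2 s3 t1 t2 : R) : s1 != 0 -> s2 != 0 -> s3 != 0 ->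
  complex.Im ((b - a) * (c - a)^*) != 0 ->
  t1%:C * c = s1%:C*(c-b) - s2%:C*(a-c) -> t2%:C*a = s2%:C*(a-c) - s3%:C*(b-a) -> s3*t1 = s1*t2.
Proof.
case: a => a1 a2; case: b => b1 b2; case: c => c1 c2.
move=> h1 h2 h3; simpc => /= ND [ex ey] [fx fy].
have ex0 : t1 * c1 - (s1 * (c1 - b1) - s2 * (a1 - c1)) = 0 by rewrite ex subrr.
have ey0 : t1 * c2 - (s1 * (c2 - b2) - s2 * (a2 - c2)) = 0 by rewrite ey subrr.
have fx0 : t2 * a1 - (s2 * (a1 - c1) - s3 * (b1 - a1)) = 0 by rewrite fx subrr.
have fy0 : t2 * a2 - (s2 * (a2 - c2) - s3 * (b2 - a2)) = 0 by rewrite fy subrr.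
set E1x := t1 * c1 - _ in ex0. set E1y := t1 * c2 - _ in ey0.
set E2x := t2 * a1 - _ in fx0. set E2y := t2 * a2 - _ in fy0.
set p := b1*c2 - b2*c1; set q := c1*a2 - c2*a1; set r := a1*b2 - a2*b1.
have X : p + q + r != 0.
  apply: contraNneq ND => H.
  rewrite (_ : _ + _ = - (p + q + r)); first by rewrite H oppr0.
  rewrite /p /q /r; ring.
have F1 : s2 * q - s1 * p = 0.
  transitivity (E1y * c1 - E1x * c2); last by rewrite ex0 ey0; ring.
  rewrite /E1x /E1y /p /q; ring.
have F4 : s3 * r - s2 * q = 0.
  transitivity (- (E2x * a2 - E2y * a1)); last by rewrite fx0 fy0; ring.
  rewrite /E2x /E2y /r /q; ring.
have F2 : (s1 + s2 - t1) * p + s2 * r = 0.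
  transitivity (E1x * b2 - E1y * b1); last by rewrite ex0 ey0; ring.
  rewrite /E1x /E1y /p /r; ring.
have F5 : (s2 + s3 - t2) * r + s2 * p = 0.
  transitivity (- (E2x * b2 - E2y * b1)); last by rewrite fx0 fy0; ring.
  rewrite /E2x /E2y /p /r; ring.
have F1' : s1 * p - s3 * r = 0.
  transitivity (- (s2 * q - s1 * p) - (s3 * r - s2 * q)); last by rewrite F1 F4; ring.
  ring.
have G : (s3 * t1 - s1 * t2) * p * r = 0.
  transitivity (- (s3 * r) * ((s1 + s2 - t1) * p + s2 * r) + s1 * p * ((s2 + s3 - t2) * r + s2 * p) - s2 * (p + r) * (s1 * p - s3 * r)).
    ring.
  by rewrite F2 F5 F1'; ring.
have p0 : p != 0.
  apply: contraNneq X => P0.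
  have r0 : r = 0 by apply/eqP; move/eqP: F1'; rewrite P0 mulr0 sub0r oppr_eq0 mulf_eq0 (negPf h3).
  have q0 : q = 0 by apply/eqP; move/eqP: F1; rewrite P0 mulr0 subr0 mulf_eq0 (negPf h2).
  by rewrite P0 q0 r0 !addr0.
have r0 : r != 0.
  apply: contraNneq X => R0.
  have P0 : p = 0 by apply/eqP; move/eqP: F1'; rewrite R0 mulr0 subr0 mulf_eq0 (negPf h1).
  have q0 : q = 0 by apply/eqP; move/eqP: F1; rewrite P0 mulr0 subr0 mulf_eq0 (negPf h2).
  by rewrite P0 q0 R0 !addr0.
apply/eqP; rewrite -subr_eq0; apply/eqP.
by move/eqP: G; rewrite !mulf_eq0 (negPf p0) (negPf r0) !orbF => /eqP.
Qed.

Lemma parP (R : rcfType) (A B C D : R[i]) : parallel A B C D ->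
  exists t : R, t != 0 /\ B - A = t%:C * (D - C).
Proof.
case=> hu [hv him]; move: hu hv him.
move: (B - A) (D - C) => [u1 u2] [v1 v2] hu hv.
simpc => /= him.
set n := v1 ^+ 2 + v2 ^+ 2.
have n0 : n != 0.
  apply: contraNneq hv => /eqP; rewrite /n paddr_eq0 ?sqr_ge0 // !sqrf_eq0.
  by case/andP => /eqP -> /eqP ->.
have e : u2 * v1 = u1 * v2 by lra.
set t := (u1 * v1 + u2 * v2) / n.
have E : u1 +i* u2 = t%:C * (v1 +i* v2).
  simpc; apply/eqP; rewrite eq_complex /=; apply/andP; split; apply/eqP;
    rewrite /t mulrAC; apply: (mulIf n0); rewrite divfK //.
    transitivity (u1 * v1 ^+ 2 + (u1 * v2) * v2); first by rewrite /n; ring.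
    by rewrite -e; ring.
  transitivity ((u2 * v1) * v1 + u2 * v2 ^+ 2); first by rewrite /n; ring.
  by rewrite e; ring.
exists t; split => //.
apply: contraNneq hu => t0; by rewrite E t0 mul0r.
Qed.

Arguments parP {R A B C D}.

Theorem corollary1 (R : rcfType) (P23 P13 P12 P P1 P2 P3 P123 : R[i]) :
  reciprocal P23 P13 P12 P P1 P2 P3 P123 ->
  cross_ratio P1 P2 P3 P123 = cross_ratio P23 P13 P12 P.
Proof.
move=> [nd1 [nd2 [h12 [h23 [h31 [g1 [g2 g3]]]]]]].
have [_ [n12 _]] := h12; have [_ [n23 _]] := h23; have [_ [n13 _]] := h31.
have [_ [m1 _]] := g1; have [_ [m2 _]] := g2; have [_ [m3 _]] := g3.
have [t1 [t1n e1]] := parP h12.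
have [t2 [t2n e2]] := parP h23.
have [t3 [t3n e3]] := parP h31.
have [s1 [s1n f1]] := parP g1.
have [s2 [s2n f2]] := parP g2.
have [s3 [s3n f3]] := parP g3.
have K : s3 * t1 = s1 * t2.
  apply: (@key R (P23 - P) (P13 - P) (P12 - P) s1 s2 s3 t1 t2 s1n s2n s3n).
  - rewrite (_ : P13 - P - (P23 - P) = P13 - P23); last by ring.
    rewrite (_ : P12 - P - (P23 - P) = P12 - P23); last by ring.
    exact: nd1.
  - rewrite (_ : P12 - P - (P13 - P) = P12 - P13); last by ring.
    rewrite (_ : P23 - P - (P12 - P) = P23 - P12); last by ring.
    rewrite -e1 -f1 -f2; ring.
  - rewrite (_ : P13 - P - (P23 - P) = P13 - P23); last by ring.
    rewrite (_ : P23 - P - (P12 - P) = P23 - P12); last by ring.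
    rewrite -e2 -f2 -f3; ring.
have T1 : t1 = s1 * t2 / s3 by rewrite -K mulrC mulKf.
rewrite /cross_ratio.
have -> : P1 - P2 = - (t1%:C * (P12 - P)) by rewrite -e1 opprB.
have -> : P3 - P123 = - (s3%:C * (P13 - P23)) by rewrite -f3 opprB.
have -> : P2 - P3 = - (t2%:C * (P23 - P)) by rewrite -e2 opprB.
rewrite f1 T1 !rmorphM fmorphV /=.
have s1C : s1%:C != 0 :> R[i] by rewrite (inj_eq (@complexI R)).
have s3C : s3%:C != 0 :> R[i] by rewrite (inj_eq (@complexI R)).
have t2C : t2%:C != 0 :> R[i] by rewrite (inj_eq (@complexI R)).
have q1 : P13 - P12 != 0 by rewrite -oppr_eq0 opprB.
have q2 : P - P23 != 0 by rewrite -oppr_eq0 opprB.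
field.
by rewrite ?q1 ?q2 ?m1 ?m2 ?m3 ?n12 ?n13 ?n23 ?s1C ?s3C ?t2C.
Qed.
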